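(* In the adjacency array model, any bounded-error quantum algorithm that decides whether an $n$-vertex undirected graph is bipartite requires $\Omega(n)$ queries, and any bounded-error quantum algorithm that decides whether an $n$-vertex undirected graph contains a cycle requires $\Omega(n)$ queries.
   Context: Adjacency array model: the degrees $d_1,\dots,d_n$ of the vertices are given for free, and for each vertex $i$ there is an oracle for an injective array $f_i:[d_i]\to[n]$ listing its neighbours in an arbitrary fixed order; query complexity counts only queries to the arrays $f_i$ (which may be made in superposition). Bounded error means success probability at least $2/3$ on every input. *)

(* Defs.v *)
From mathcomp Require Import all_boot all_algebra.
From mathcomp Require Import complex.
From mathcomp Require Import Rstruct.
Set Implicit Arguments. Unset Strict Implicit. Unset Printing Implicit Defensive.
Import GRing.Theory Num.Theory.
Local Open Scope ring_scope.

Notation C := (complex Rdefinitions.R).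

(* deg i = d_i ; nbr i j = f_i(j) for j < d_i (values for j >= d_i are irrelevant).
   Array indices are 0-based: [d_i] = {0,...,d_i-1}. *)
Record adj_array (n : nat) := AdjArray {
  deg : 'I_n -> nat;
  nbr : 'I_n -> 'I_n -> 'I_n }.

Definition adj n (A : adj_array n) : rel 'I_n :=
  fun u v => [exists j : 'I_n, (j < deg A u)%N && (nbr A u j == v)].

Definition valid_array n (A : adj_array n) : Prop :=
  [/\ forall u, (deg A u <= n)%N,
      forall u (j k : 'I_n), (j < deg A u)%N -> (k < deg A u)%N ->
        nbr A u j = nbr A u k -> j = k,
      forall u v, adj A u v -> adj A v u &
      forall u, ~~ adj A u u].

Definition bipartite n (A : adj_array n) : Prop :=
  exists col : 'I_n -> bool, forall u v, adj A u v -> col u != col v.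

Definition has_cycle n (A : adj_array n) : Prop :=
  exists s : seq 'I_n, [/\ (3 <= size s)%N, uniq s & cycle (adj A) s].

Lemma ord_pos n (a : 'I_n) : (0 < n)%N.
Proof. by case: a => k; case: n. Qed.

Definition addI n (a b : 'I_n) : 'I_n := Ordinal (ltn_pmod (a + b) (ord_pos a)).

(* basis states: (vertex i, array index j, answer register b, workspace w) *)
Definition qbasis (n m : nat) := ('I_n * 'I_n * 'I_n * 'I_m)%type.

Definition qstate (S : finType) := S -> C.
Definition qop (S : finType) := S -> S -> C.

Definition qapply (S : finType) (U : qop S) (v : qstate S) : qstate S :=
  fun s => \sum_(t : S) U s t * v t.

Definition unitary (S : finType) (U : qop S) : Prop :=
  forall s t : S, \sum_(u : S) (U u s)^* * U u t = (s == t)%:R.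

Definition unit_vector (S : finType) (v : qstate S) : Prop :=
  \sum_(s : S) `|v s| ^+ 2 = 1.

Definition qstep n m (A : adj_array n) (s : qbasis n m) : qbasis n m :=
  let: (i, j, b, w) := s in
  if (j < deg A i)%N then (i, j, addI b (nbr A i j), w) else s.

Definition oracle n m (A : adj_array n) : qop (qbasis n m) :=
  fun s t => (s == qstep A t)%:R.

(* Since the degrees are given for
   free, everything may depend on the degree sequence d. *)
Record qalg (n T m : nat) := QAlg {
  init : ('I_n -> nat) -> qstate (qbasis n m);
  U : ('I_n -> nat) -> nat -> qop (qbasis n m);
  acc : ('I_n -> nat) -> pred (qbasis n m) }.

Definition qalg_wf n T m (Q : qalg n T m) : Prop :=
  (forall d, unit_vector (init Q d)) /\
  (forall d k, (k <= T)%N -> unitary (U Q d k)).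

Fixpoint run n T m (Q : qalg n T m) (A : adj_array n) (k : nat) : qstate (qbasis n m) :=
  match k with
  | 0 => qapply (U Q (deg A) 0) (init Q (deg A))
  | k'.+1 => qapply (U Q (deg A) k) (qapply (@oracle n m A) (run Q A k'))
  end.

Definition acc_prob n T m (Q : qalg n T m) (A : adj_array n) : C :=
  \sum_(s | acc Q (deg A) s) `|run Q A T s| ^+ 2.

Definition decides n T m (Q : qalg n T m) (P : adj_array n -> Prop) : Prop :=
  forall A : adj_array n, valid_array A ->
    (P A -> 2%:R / 3%:R <= acc_prob Q A) /\
    (~ P A -> acc_prob Q A <= 1 / 3%:R).

Definition omega_n_lower_bound (P : forall n, adj_array n -> Prop) : Prop :=
  exists k N : nat, forall n : nat, (N <= n)%N ->
    forall (T m : nat) (Q : qalg n T m), qalg_wf Q -> decides Q (@P n) ->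
      (n <= k * T)%N.

(* Main.v *)
Require Import Defs.
From mathcomp Require Import all_boot all_order all_algebra all_fingroup.
From mathcomp Require Import complex Rstruct.
From mathcomp Require Import ring zify.
From Stdlib Require Import FunctionalExtensionality.

Module MQ.
Set Implicit Arguments. Unset Strict Implicit. Unset Printing Implicit Defensive.
Import Order.TTheory GRing.Theory Num.Theory.
Local Open Scope ring_scope.

Definition ip (S : finType) (v w : qstate S) : C := \sum_s (v s)^* * w s.

Lemma ip_unitary (S : finType) (W : qop S) v w :
  unitary W -> ip (qapply W v) (qapply W w) = ip v w.
Proof.
move=> HW; rewrite /ip /qapply.
under eq_bigr => s _ do rewrite rmorph_sum /= mulr_suml.
rewrite exchange_big; apply: eq_bigr => t _ /=.
under eq_bigr => s _ do rewrite mulr_sumr.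
rewrite exchange_big /=.
transitivity (\sum_u (v t)^* * w u * (t == u)%:R).
  apply: eq_bigr => u _; rewrite -HW mulr_sumr; apply: eq_bigr => s _.
  rewrite rmorphM /=; ring.
rewrite (bigD1 t) //= eqxx mulr1 big1 ?addr0 // => u /negbTE.
by rewrite eq_sym => ->; rewrite mulr0.
Qed.

Lemma sum_ind (S : finType) (f : S -> S) (phi : qstate S) (inj : injective f) s :
  \sum_t (s == f t)%:R * phi t = phi (invF inj s).
Proof.
rewrite (bigD1 (invF inj s)) //= f_invF eqxx mul1r big1 ?addr0 // => t Ht.
case: eqP => [E|]; last by rewrite mul0r.
by move: Ht; rewrite E invF_f eqxx.
Qed.

End MQ.
Import MQ.

Module MQ2.
Set Implicit Arguments. Unset Strict Implicit. Unset Printing Implicit Defensive.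
Import Order.TTheory GRing.Theory Num.Theory.
Local Open Scope ring_scope.

Section Oracle.
Variables (n m : nat).
Implicit Types (A B : adj_array n).

Lemma addI_inj (b b' c : 'I_n) : addI b c = addI b' c -> b = b'.
Proof.
move=> /(congr1 val) /= /eqP; rewrite eqn_modDr !modn_small // => /eqP H.
exact: val_inj.
Qed.

Lemma qstep_inj A : injective (@qstep n m A).
Proof.
move=> [[[i j] b] w] [[[i' j'] b'] w'] /=.
case: ifP => H1; case: ifP => H2 // [] Ei Ej; subst i' j'.
- move=> Eb ->; congr (_, _, _, _); apply: val_inj.
  by move/eqP: Eb; rewrite eqn_modDr !modn_small // => /eqP.
- by rewrite H1 in H2.
- by rewrite H2 in H1.
Qed.

Lemma qstep_pos A s : (@qstep n m A s).1.1 = s.1.1.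
Proof. by case: s => [[[i j] b] w] /=; case: ifP. Qed.

Lemma oracle_apply A phi s :
  qapply (@oracle n m A) phi s = phi (invF (@qstep_inj A) s).
Proof. rewrite /qapply /oracle; exact: sum_ind. Qed.

Lemma oracle_unitary A : unitary (@oracle n m A).
Proof.
move=> s t; rewrite /oracle.
rewrite (bigD1 (qstep A s)) //= eqxx conjC_nat mul1r big1 ?addr0.
  by rewrite (inj_eq (@qstep_inj A)).
by move=> u /negbTE ->; rewrite conjC_nat mul0r.
Qed.

Lemma sqr_real_ge0 (x : C) : x \is Num.real -> 0 <= x ^+ 2.
Proof. by move=> xr; rewrite -real_normK // exprn_ge0. Qed.

Lemma amgm (x y : C) : x \is Num.real -> y \is Num.real ->
  2%:R * x * y <= x ^+ 2 + y ^+ 2.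
Proof.
move=> xr yr; rewrite -subr_ge0.
have -> : x ^+ 2 + y ^+ 2 - 2%:R * x * y = (x - y) ^+ 2 by ring.
by apply: sqr_real_ge0; rewrite rpredB.
Qed.

Lemma step_bound A B (Sv : pred 'I_n) (phi psi : qstate (qbasis n m)) :
  deg A = deg B ->
  (forall i (j : 'I_n), (j < deg A i)%N -> nbr A i j != nbr B i j -> Sv i) ->
  `|ip (qapply (oracle A) phi) (qapply (oracle B) psi) - ip phi psi|
    <= \sum_(s | Sv s.1.1.1) (`|phi s| ^+ 2 + `|psi s| ^+ 2).
Proof.
move=> Edeg Hcov.
set gA := invF (@qstep_inj A); set gB := invF (@qstep_inj B).
pose h t := gB (qstep A t).
have hinj : injective h.
  move=> t1 t2; rewrite /h => E.
  have := congr1 (qstep B) E; rewrite /gB !f_invF; exact: qstep_inj.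
have hpos t : (h t).1.1.1 = t.1.1.1.
  have E : qstep B (h t) = qstep A t by rewrite /h /gB f_invF.
  by have := congr1 (fun s => s.1.1.1) E; rewrite /= !qstep_pos.
have hid t : ~~ Sv t.1.1.1 -> h t = t.
  move=> HS; rewrite /h.
  suff -> : qstep A t = qstep B t by rewrite /gB invF_f.
  case: t HS => [[[i j] b] w] /= HS; rewrite -Edeg; case: ifP => // Hj.
  case: (nbr A i j =P nbr B i j) => [-> //|/eqP Hne].
  by rewrite (Hcov i j Hj Hne) in HS.
have E1 : ip (qapply (oracle A) phi) (qapply (oracle B) psi)
        = \sum_t (phi t)^* * psi (h t).
  rewrite /ip (reindex_inj (@qstep_inj A)) /=.
  by apply: eq_bigr => t _; rewrite !oracle_apply invF_f.
rewrite E1 /ip -sumrB.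
under eq_bigr => t _ do rewrite -mulrBr.
rewrite (bigID (fun t => Sv t.1.1.1)) /= [X in _ + X]big1 ?addr0; last first.
  by move=> t Ht; rewrite hid // subrr mulr0.
apply: (le_trans (ler_norm_sum _ _ _)).
have H2 : 0 < 2%:R :> C by rewrite ltr0n.
rewrite -(ler_pM2l H2) !mulr_sumr.
have Hre : \sum_(t | Sv t.1.1.1) `|psi (h t)| ^+ 2 = \sum_(t | Sv t.1.1.1) `|psi t| ^+ 2.
  rewrite [RHS](reindex_inj hinj) /=.
  by apply: eq_bigl => t; rewrite hpos.
apply: (le_trans (y := \sum_(t | Sv t.1.1.1)
   (2%:R * `|phi t| ^+ 2 + `|psi (h t)| ^+ 2 + `|psi t| ^+ 2))).
  apply: ler_sum => t _.
  rewrite normrM norm_conjC.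
  apply: (le_trans (y := 2%:R * (`|phi t| * (`|psi (h t)| + `|psi t|)))).
    rewrite ler_pM2l //; apply: ler_wpM2l; first exact: normr_ge0.
    exact: ler_normB.
  have a1 := amgm (normr_real (phi t)) (normr_real (psi (h t))).
  have a2 := amgm (normr_real (phi t)) (normr_real (psi t)).
  have -> : 2%:R * (`|phi t| * (`|psi (h t)| + `|psi t|)) =
     2%:R * `|phi t| * `|psi (h t)| + 2%:R * `|phi t| * `|psi t| by ring.
  apply: (le_trans (lerD a1 a2)); rewrite le_eqVlt; apply/orP; left; apply/eqP; ring.
rewrite big_split /= big_split /= Hre -mulr_sumr -mulr_sumr big_split /=.
rewrite le_eqVlt; apply/orP; left; apply/eqP; ring.
Qed.

End Oracle.

End MQ2.
Import MQ2.

Module MQ3.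
Set Implicit Arguments. Unset Strict Implicit. Unset Printing Implicit Defensive.
Import Order.TTheory GRing.Theory Num.Theory.
Local Open Scope ring_scope.

Lemma ip_self (S : finType) (v : qstate S) : ip v v = \sum_s `|v s| ^+ 2.
Proof. by apply: eq_bigr => s _; rewrite normCKC. Qed.

Lemma ip_conj (S : finType) (v w : qstate S) : ip w v = (ip v w)^*.
Proof.
rewrite /ip rmorph_sum; apply: eq_bigr => s _.
by rewrite rmorphM /= conjCK mulrC.
Qed.

Lemma sum_sub_le (S : finType) (P : pred S) (F : S -> C) :
  (forall s, 0 <= F s) -> \sum_(s | P s) F s <= \sum_s F s.
Proof.
move=> H; rewrite big_mkcond /=; apply: ler_sum => s _.
by case: (P s) => //; exact: H.
Qed.

Lemma final_bound (S : finType) (a b : qstate S) (P : pred S) :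
  ip a a = 1 -> ip b b = 1 ->
  2%:R / 3%:R <= \sum_(s | P s) `|a s| ^+ 2 ->
  \sum_(s | P s) `|b s| ^+ 2 <= 1 / 3%:R ->
  1 <= 36%:R * `|1 - ip a b|.
Proof.
move=> Ha Hb Hpa Hpb.
set pa := \sum_(s | P s) _ in Hpa; set pb := \sum_(s | P s) _ in Hpb.
set w := 1 - ip a b.
set D := \sum_s `|a s - b s| ^+ 2.
have H3 : 0 < 3%:R :> C by rewrite ltr0n.
have e1 : 0 <= 3%:R * pa - 2%:R.
  by rewrite subr_ge0 mulrC -ler_pdivrMr.
have e2 : 0 <= 1 - 3%:R * pb.
  by rewrite subr_ge0 mulrC -ler_pdivlMr.
have e3 : 0 <= 12%:R * D + 4%:R * pb - 3%:R * pa.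
  rewrite subr_ge0.
  apply: (le_trans (y := \sum_(s | P s) (12%:R * `|a s - b s| ^+ 2 + 4%:R * `|b s| ^+ 2))).
    rewrite /pa mulr_sumr; apply: ler_sum => s _.
    set u := `|a s - b s|; set v := `|b s|.
    have ur : u \is Num.real by exact: normr_real.
    have vr : v \is Num.real by exact: normr_real.
    have Hab : `|a s| <= u + v.
      by rewrite /u /v; apply: (le_trans _ (ler_normD _ _)); rewrite subrK.
    have Hsq : `|a s| ^+ 2 <= (u + v) ^+ 2.
      by rewrite lerXn2r // ?nnegrE ?addr_ge0 ?normr_ge0.
    apply: (le_trans (ler_wpM2l (ler0n _ 3) Hsq)).
    rewrite -subr_ge0.
    have -> : 12%:R * u ^+ 2 + 4%:R * v ^+ 2 - 3%:R * (u + v) ^+ 2 = (3%:R * u - v) ^+ 2 by ring.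
    by apply: sqr_real_ge0; rewrite rpredB // rpredM // rpred_nat.
  rewrite big_split /= -!mulr_sumr lerD2r ler_wpM2l ?ler0n //.
  by apply: sum_sub_le => s; exact: exprn_ge0 (normr_ge0 _).
have e4 : 0 <= 2%:R * `|w| - D.
  have -> : D = w + w^*.
    rewrite /D /w rmorphB /= rmorph1 -ip_conj.
    have -> : \sum_s `|a s - b s| ^+ 2 = ip a a - ip a b - ip b a + ip b b.
      rewrite /ip -!sumrB -big_split /=; apply: eq_bigr => s _.
      rewrite normCKC rmorphB /=; ring.
    by rewrite Ha Hb; ring.
  have := (leif_Re_Creal w).1; rewrite ReE => Hre.
  rewrite subr_ge0; rewrite -(ler_pM2r (x := 2%:R^-1)) ?invr_gt0 ?ltr0n //.
  by rewrite mulrAC mulfV ?pnatr_eq0 // mul1r.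
have H : 0 <= 2%:R * (36%:R * `|w| - 1).
  have -> : 2%:R * (36%:R * `|w| - 1) =
     36%:R * (2%:R * `|w| - D) + 3%:R * (12%:R * D + 4%:R * pb - 3%:R * pa)
     + 3%:R * (3%:R * pa - 2%:R) + 4%:R * (1 - 3%:R * pb) by ring.
  by rewrite !addr_ge0 // mulr_ge0 ?ler0n.
by rewrite -subr_ge0; move: H; rewrite pmulr_rge0 ?ltr0n.
Qed.

End MQ3.
Import MQ3.

Module MQ4.
Set Implicit Arguments. Unset Strict Implicit. Unset Printing Implicit Defensive.
Import Order.TTheory GRing.Theory Num.Theory.
Local Open Scope ring_scope.

Section Adv.
Variables (n T m : nat) (Q : qalg n T m).
Hypothesis wf : qalg_wf Q.

Lemma norm_run A t : (t <= T)%N -> ip (run Q A t) (run Q A t) = 1.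
Proof.
case: wf => Hinit HU.
elim: t => [|t IH] Ht /=.
  by rewrite ip_unitary ?ip_self ?Hinit //; apply: HU.
rewrite ip_unitary; last exact: HU _ _ Ht.
rewrite ip_unitary; last exact: oracle_unitary.
by rewrite IH // ltnW.
Qed.

Definition Bnd A B (Sv : pred 'I_n) t :=
  \sum_(s | Sv s.1.1.1) (`|run Q A t s| ^+ 2 + `|run Q B t s| ^+ 2).

Lemma run_step A B (Sv : pred 'I_n) t : (t < T)%N ->
  deg A = deg B ->
  (forall i (j : 'I_n), (j < deg A i)%N -> nbr A i j != nbr B i j -> Sv i) ->
  `|ip (run Q A t.+1) (run Q B t.+1) - ip (run Q A t) (run Q B t)| <= Bnd A B Sv t.
Proof.
move=> Ht Ed Hc; rewrite /= -Ed ip_unitary; last by apply: wf.2.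
exact: step_bound.
Qed.

Lemma run_tele A B (Sv : pred 'I_n) t : (t <= T)%N ->
  deg A = deg B ->
  (forall i (j : 'I_n), (j < deg A i)%N -> nbr A i j != nbr B i j -> Sv i) ->
  `|ip (run Q A 0) (run Q B 0) - ip (run Q A t) (run Q B t)|
     <= \sum_(k < t) Bnd A B Sv k.
Proof.
move=> + Ed Hc; elim: t => [|t IH] Ht.
  by rewrite subrr normr0 big_ord0.
rewrite big_ord_recr /=.
apply: (le_trans (y := `|ip (run Q A 0) (run Q B 0) - ip (run Q A t) (run Q B t)|
   + `|ip (run Q A t.+1) (run Q B t.+1) - ip (run Q A t) (run Q B t)|)).
  set a0 := ip (run Q A 0) (run Q B 0).
  set a1 := ip (run Q A t) (run Q B t).
  set a2 := ip (run Q A t.+1) (run Q B t.+1).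
  have -> : a0 - a2 = (a0 - a1) - (a2 - a1) by ring.
  exact: ler_normB.
by apply: lerD; [apply: IH; exact: ltnW | exact: run_step].
Qed.

Lemma adversary (P : adj_array n -> Prop) (Hdec : decides Q P)
  (I : finType) (x y : I -> adj_array n) (Sv : I -> pred 'I_n) :
  (forall q, deg (x q) = deg (y q)) ->
  (forall q, valid_array (x q) /\ valid_array (y q)) ->
  (forall q, (P (x q) /\ ~ P (y q)) \/ (~ P (x q) /\ P (y q))) ->
  (forall q i (j : 'I_n), (j < deg (x q) i)%N -> nbr (x q) i j != nbr (y q) i j -> Sv q i) ->
  #|I|%:R <= 36%:R * \sum_(t < T) \sum_q Bnd (x q) (y q) (Sv q) t.
Proof.
move=> Ed Hv HP Hc.
rewrite exchange_big /= mulr_sumr -sumr_const.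
apply: ler_sum => q _.
have H0 : ip (run Q (x q) 0) (run Q (y q) 0) = 1.
  by rewrite /= Ed -/(run Q (y q) 0) (norm_run (y q) (leq0n T)).
have Ht := run_tele (leqnn T) (Ed q) (Hc q).
rewrite H0 in Ht.
apply: (le_trans _ (ler_wpM2l (ler0n _ 36) Ht)).
have Nx := norm_run (x q) (leqnn T).
have Ny := norm_run (y q) (leqnn T).
case: (Hv q) => vx vy.
case: (Hdec _ vx) => Hx1 Hx2; case: (Hdec _ vy) => Hy1 Hy2.
rewrite /acc_prob in Hx1 Hx2 Hy1 Hy2.
have EE : acc Q (deg (y q)) = acc Q (deg (x q)) by rewrite (Ed q).
rewrite EE in Hy1. rewrite EE in Hy2.
case: (HP q) => [[px py]|[px py]].
  exact: (final_bound Nx Ny (Hx1 px) (Hy2 py)).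
have := final_bound Ny Nx (Hy1 py) (Hx2 px).
rewrite ip_conj; set z := ip _ _.
have -> : 1 - z^* = (1 - z)^* by rewrite rmorphB /= rmorph1.
by rewrite norm_conjC.
Qed.

End Adv.

End MQ4.
Import MQ4.

Module MR.
Set Implicit Arguments. Unset Strict Implicit. Unset Printing Implicit Defensive.

Local Open Scope group_scope.
Section Relabel.
Variable n : nat.
Implicit Types (A : adj_array n) (pi : {perm 'I_n}).

Definition relabel pi A : adj_array n :=
  AdjArray (fun u => deg A (pi^-1 u)) (fun u j => pi (nbr A (pi^-1 u) j)).

Lemma adj_relabel pi A u v : adj (relabel pi A) u v = adj A (pi^-1 u) (pi^-1 v).
Proof.
rewrite /adj /=; apply: eq_existsb => j.
by rewrite (can2_eq (permK pi) (permKV pi)).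
Qed.

Lemma valid_relabel pi A : valid_array A -> valid_array (relabel pi A).
Proof.
case=> H1 H2 H3 H4; split => /=.
- by move=> u; apply: H1.
- by move=> u j k Hj Hk /perm_inj; apply: H2.
- by move=> u v; rewrite !adj_relabel; apply: H3.
- by move=> u; rewrite adj_relabel.
Qed.

Lemma bip_relabel pi A : bipartite A -> bipartite (relabel pi A).
Proof.
case=> col Hc; exists (fun u => col (pi^-1 u)) => u v.
by rewrite adj_relabel; apply: Hc.
Qed.

Lemma bip_relabel' pi A : bipartite (relabel pi A) -> bipartite A.
Proof.
case=> col Hc; exists (fun u => col (pi u)) => u v H.
by apply: Hc; rewrite adj_relabel !permK.
Qed.

Lemma cyc_relabel pi A : has_cycle A -> has_cycle (relabel pi A).
Proof.
case=> s [Hs Hu Hc]; exists (map pi s); split.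
- by rewrite size_map.
- by rewrite map_inj_uniq //; exact: perm_inj.
- rewrite cycle_map; apply: etrans Hc; apply: eq_cycle => a b /=.
  by rewrite adj_relabel !permK.
Qed.

Lemma cyc_relabel' pi A : has_cycle (relabel pi A) -> has_cycle A.
Proof.
case=> s [Hs Hu Hc]; exists (map (pi^-1) s); split.
- by rewrite size_map.
- by rewrite map_inj_uniq //; exact: perm_inj.
- rewrite cycle_map; apply: etrans Hc; apply: eq_cycle => a b /=.
  by rewrite adj_relabel.
Qed.

End Relabel.

End MR.
Import MR.

Module MC.
Import Order.TTheory GRing.Theory Num.Theory.
Set Implicit Arguments. Unset Strict Implicit. Unset Printing Implicit Defensive.

Section Nat.
Variables (n' L M : nat).
Hypotheses (HL3 : 3 <= L) (HLo : odd L) (HM1 : 0 < M) (HML : M < L) (Hn : M + L + 1 <= n').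

Definition degn (v : nat) : nat := if (v == 0) || (v == n') then 1 else 2.
Definition xn (v j : nat) : nat := if v == 0 then 1 else if j == 0 then v.-1 else v.+1.
Definition yn (v j : nat) : nat :=
  if v == 0 then L.+1
  else if v <= L then (if j == 0 then (if v == 1 then L else v.-1) else (if v == L then 1 else v.+1))
  else (if j == 0 then (if v == L.+1 then 0 else v.-1) else v.+1).
Definition tf (k v : nat) : nat :=
  if (1 <= v) && (v <= k) then v + L else if (L < v) && (v <= L + k) then v - L else v.
Definition inV (k v : nat) : bool := (v == k) || (v == k.+1) || (v == k + L) || (v == (k + L).+1).

Ltac dlia := repeat match goal with H : _ \/ _ |- _ => case: H => H end; lia.

Lemma degnP v : ((v == 0) || (v == n')) /\ degn v = 1 \/ ~~ ((v == 0) || (v == n')) /\ degn v = 2.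
Proof. rewrite /degn; case: ifP => H; [left|right]; rewrite ?H //. Qed.

Lemma xnP v j : (v == 0) /\ xn v j = 1 \/ (v != 0) /\ (j == 0) /\ xn v j = v.-1
  \/ (v != 0) /\ (j != 0) /\ xn v j = v.+1.
Proof. rewrite /xn; do ! case: ifP => ?; lia. Qed.

Lemma ynP v j :
      ((v == 0) /\ yn v j = L.+1) \/
      (1 <= v <= L /\ j == 0 /\ v == 1 /\ yn v j = L) \/
      (1 <= v <= L /\ j == 0 /\ v != 1 /\ yn v j = v.-1) \/
      (1 <= v <= L /\ j != 0 /\ v == L /\ yn v j = 1) \/
      (1 <= v <= L /\ j != 0 /\ v != L /\ yn v j = v.+1) \/
      (L < v /\ j == 0 /\ v == L.+1 /\ yn v j = 0) \/
      (L < v /\ j == 0 /\ v != L.+1 /\ yn v j = v.-1) \/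
      (L < v /\ j != 0 /\ yn v j = v.+1).
Proof. rewrite /yn; do ! case: ifP => ?; lia. Qed.

Lemma tfP k v : [\/ (1 <= v <= k) /\ tf k v = v + L, (L < v <= L + k) /\ tf k v = v - L
  | ~~ (1 <= v <= k) /\ ~~ (L < v <= L + k) /\ tf k v = v].
Proof.
rewrite /tf; case: ifP => H1; [by constructor 1|].
by case: ifP => H2; [constructor 2|constructor 3].
Qed.
Lemma tfP' k v : ((1 <= v <= k) /\ tf k v = v + L) \/ ((L < v <= L + k) /\ tf k v = v - L)
  \/ (~~ (1 <= v <= k) /\ ~~ (L < v <= L + k) /\ tf k v = v).
Proof. by case: (tfP k v); tauto. Qed.

Lemma tfK k v : k <= L -> tf k (tf k v) = v.
Proof.
move=> Hk; have := tfP' k v; move: (tf k v) => w Hw.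
have := tfP' k w; move: (tf k w) => r Hr; lia.
Qed.

Lemma tf_le k v : k <= M -> v <= n' -> tf k v <= n'.
Proof. move=> Hk Hv; have := tfP' k v; move: (tf k v) => w Hw; lia. Qed.

Lemma degn_tf k v : k <= M -> v <= n' -> degn (tf k v) = degn v.
Proof.
move=> Hk Hv; have := tfP' k v; move: (tf k v) => w Hw.
have := degnP w; have := degnP v; move: (degn w) (degn v) => a b; lia.
Qed.

Lemma inV_tf k v : 1 <= k <= M -> inV k (tf k v) = inV k v.
Proof.
move=> Hk; have := tfP' k v; move: (tf k v) => w Hw.
rewrite /inV; apply/idP/idP; lia.
Qed.

Lemma xn_le v j : v <= n' -> j < degn v -> xn v j <= n'.
Proof. move=> Hv Hj; have := degnP v; have := xnP v j; move: (xn v j) (degn v) Hj => a b; lia. Qed.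

Lemma yn_le v j : v <= n' -> j < degn v -> yn v j <= n'.
Proof. move=> Hv Hj; have := degnP v; have := ynP v j; move: (yn v j) (degn v) Hj => a b; lia. Qed.

Lemma agree k v j : 1 <= k <= M -> v <= n' -> j < degn v -> ~~ inV k v ->
  tf k (yn (tf k v) j) = xn v j.
Proof.
move=> Hk Hv Hj HV.
have := degnP v; move: (degn v) Hj => d Hj Hd.
have := tfP' k v; move: (tf k v) => w Hw.
have := ynP w j; move: (yn w j) => z Hz.
have := tfP' k z; move: (tf k z) => r Hr.
have := xnP v j; move: (xn v j) => s Hs.
move: HV; rewrite /inV => HV; dlia.
Qed.


Definition relx u v := ((0 < degn u) && (xn u 0 == v)) || ((1 < degn u) && (xn u 1 == v)).
Definition rely u v := ((0 < degn u) && (yn u 0 == v)) || ((1 < degn u) && (yn u 1 == v)).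

Ltac unf u := have := degnP u; have := xnP u 0; have := xnP u 1;
  move: (degn u) (xn u 0) (xn u 1) => ? ? ?.
Ltac unfy u := have := degnP u; have := ynP u 0; have := ynP u 1;
  move: (degn u) (yn u 0) (yn u 1) => ? ? ?.

Lemma relx_sym u v : u <= n' -> v <= n' -> relx u v -> relx v u.
Proof.
rewrite /relx => Hu Hv /orP [] /andP [Hd /eqP Ev]; subst v; apply/orP.
- case: (boolP ((u == 0) || (xn u 0 == 0))) => Hc; [left|right];
  move: Hc Hd; have := xnP u 0; move: (xn u 0) => w Hw;
  have := degnP w; have := xnP w 0; have := xnP w 1;
  move: (degn w) (xn w 0) (xn w 1) => ? ? ? ? ? ? ? ?; have := degnP u; dlia.
- left; move: Hd; have := xnP u 1; move: (xn u 1) => w Hw;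
  have := degnP w; have := xnP w 0;
  move: (degn w) (xn w 0) => ? ? ? ? ?; have := degnP u; dlia.
Qed.
Lemma relx_irr u : u <= n' -> ~~ relx u u.
Proof. rewrite /relx => Hu; unf u => H1 H2 H3; dlia. Qed.
Lemma relx_step u v : u <= n' -> relx u v -> (u.+1 == v) || (v.+1 == u).
Proof.
rewrite /relx => Hu /orP [] /andP [Hd /eqP <-]; move: Hd; unf u => H1 H2 H3 Hd; dlia.
Qed.

Lemma rely_sym u v : u <= n' -> v <= n' -> rely u v -> rely v u.
Proof.
rewrite /rely => Hu Hv /orP [] /andP [Hd /eqP Ev]; subst v; apply/orP.
- case: (boolP ((u == 0) || (yn u 0 == 0))) => Hc; [left|right];
  move: Hc Hd; have := ynP u 0; move: (yn u 0) => w Hw;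
  have := degnP w; have := ynP w 0; have := ynP w 1;
  move: (degn w) (yn w 0) (yn w 1) => ? ? ? ? ? ? ? ?; have := degnP u; dlia.
- left; move: Hd; have := ynP u 1; move: (yn u 1) => w Hw;
  have := degnP w; have := ynP w 0;
  move: (degn w) (yn w 0) => ? ? ? ? ?; have := degnP u; dlia.
Qed.
Lemma rely_irr u : u <= n' -> ~~ rely u u.
Proof. rewrite /rely => Hu; unfy u => H1 H2 H3; dlia. Qed.
Lemma rely_cyc c : 1 <= c < L -> rely c c.+1.
Proof.
rewrite /rely => Hc; apply/orP; right; have := degnP c; have := ynP c 1;
move: (degn c) (yn c 1) => ? ? ? ?; dlia.
Qed.
Lemma rely_cycL : rely L 1.
Proof.
rewrite /rely; apply/orP; right; have := degnP L; have := ynP L 1;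
move: (degn L) (yn L 1) => ? ? ? ?; dlia.
Qed.
Lemma xn_inj u j k : j < degn u -> k < degn u -> xn u j = xn u k -> j = k.
Proof.
move=> Hj Hk; have := degnP u; have := xnP u j; have := xnP u k.
move: (degn u) (xn u j) (xn u k) Hj Hk => ? ? ?; lia.
Qed.
Lemma yn_inj u j k : j < degn u -> k < degn u -> yn u j = yn u k -> j = k.
Proof.
move=> Hj Hk; have := degnP u; have := ynP u j; have := ynP u k.
move: (degn u) (yn u j) (yn u k) Hj Hk => ? ? ? ? ? H1 H2 H3; dlia.
Qed.

Lemma sum_eq1 (v c N : nat) : \sum_(k < N) (v == k + c) = (c <= v) && (v < N + c).
Proof.
elim: N => [|N IH]; first by rewrite big_ord0; lia.
rewrite big_ord_recr /= IH; lia.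
Qed.

Lemma inV_count v : \sum_(k < M) inV k.+1 v <= 4.
Proof.
apply: (@leq_trans (\sum_(k < M) ((v == k + 1) + (v == k + 2) + (v == k + (L + 1)) + (v == k + (L + 2))))).
  apply: leq_sum => k _; rewrite /inV; lia.
rewrite !big_split /= !sum_eq1; lia.
Qed.


Local Notation p := n'.+1.

Lemma Hp1 : 1 < p. Proof. lia. Qed.

Definition mkA (f : nat -> nat -> nat) : adj_array p :=
  AdjArray (fun v : 'I_p => degn v) (fun v j => inord (f v j)).

Lemma ord_le' (u : 'I_p) : u <= n'.
Proof. by rewrite -ltnS. Qed.

Lemma degn_le2 v : degn v <= 2. Proof. rewrite /degn; case: ifP => //. Qed.

Section MkA.
Variable f : nat -> nat -> nat.
Hypothesis Hf : forall v j, v <= n' -> j < degn v -> f v j <= n'.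

Lemma adj_mkA (u v : 'I_p) :
  adj (mkA f) u v = ((0 < degn u) && (f u 0 == v)) || ((1 < degn u) && (f u 1 == v)).
Proof.
have Hu : u <= n' by rewrite -ltnS.
apply/existsP/orP => /=.
- case=> j /andP [Hj /eqP E].
  have Ej : f u j = v by rewrite -E inordK // ltnS Hf.
  have := degn_le2 u => H2.
  clear E; case: j Hj Ej => [[|[|j]] Hjp] //= Hj Ej.
  + by left; rewrite Hj Ej eqxx.
  + by right; rewrite Hj Ej eqxx.
  + lia.
- case=> /andP [Hd /eqP E].
  + exists (inord 0); rewrite inordK //; apply/andP; split => //.
    by apply/eqP; apply: val_inj => /=; rewrite E inord_val.
  + exists (inord 1); rewrite inordK ?Hp1 //; apply/andP; split => //.
    apply/eqP; apply: val_inj => /=. rewrite -E inordK // ltnS Hf //; lia.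
Qed.

Lemma valid_mkA :
  (forall u j k, j < degn u -> k < degn u -> f u j = f u k -> j = k) ->
  (forall u v, u <= n' -> v <= n' ->
     ((0 < degn u) && (f u 0 == v)) || ((1 < degn u) && (f u 1 == v)) ->
     ((0 < degn v) && (f v 0 == u)) || ((1 < degn v) && (f v 1 == u))) ->
  (forall u, u <= n' -> ~~ (((0 < degn u) && (f u 0 == u)) || ((1 < degn u) && (f u 1 == u)))) ->
  valid_array (mkA f).
Proof.
move=> Hinj Hsym Hirr; split => /=.
- move=> u; exact: leq_trans (degn_le2 u) Hp1.
- move=> u j k Hj Hk /(congr1 val); rewrite /= !inordK ?ltnS ?Hf ?ord_le' //.
  by move/(Hinj _ _ _ Hj Hk) => E; apply: val_inj.
- by move=> u v; rewrite !adj_mkA; apply: Hsym; rewrite -ltnS.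
- by move=> u; rewrite adj_mkA; apply: Hirr; rewrite -ltnS.
Qed.
End MkA.

Definition x0 := mkA xn.
Definition y0 := mkA yn.

Lemma adj_x0 u v : adj x0 u v = relx u v.
Proof. by rewrite adj_mkA //; exact: xn_le. Qed.
Lemma adj_y0 u v : adj y0 u v = rely u v.
Proof. by rewrite adj_mkA //; exact: yn_le. Qed.

Lemma valid_x0 : valid_array x0.
Proof.
apply: (valid_mkA xn_le); [exact: xn_inj | exact: relx_sym | exact: relx_irr].
Qed.
Lemma valid_y0 : valid_array y0.
Proof.
apply: (valid_mkA yn_le); [exact: yn_inj | exact: rely_sym | exact: rely_irr].
Qed.

Lemma ord_le (u : 'I_p) : u <= n'.
Proof. by rewrite -ltnS. Qed.

Lemma bip_x0 : bipartite x0.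
Proof.
exists (fun u => odd u) => u v; rewrite adj_x0 => /(relx_step (ord_le u)) /orP [] /eqP <- /=;
  by case: (odd _).
Qed.

Lemma nbip_y0 : ~ bipartite y0.
Proof.
case=> col Hc.
have Hstep c : 1 <= c < L -> col (inord c.+1) = ~~ col (inord c).
  move=> Hc1; have := Hc (inord c) (inord c.+1).
  rewrite adj_y0 !inordK; try lia.
  move/(_ (rely_cyc Hc1)); by case: (col _); case: (col _).
have Hind c : 1 <= c <= L -> col (inord c) = if odd c then col (inord 1) else ~~ col (inord 1).
  elim: c => [|c IH] // Hc1.
  case: (posnP c) => [->|Hc0] //.
  rewrite Hstep ?IH; try lia.
  by rewrite /=; case: (odd c); case: (col _).
have := Hc (inord L) (inord 1); rewrite adj_y0 !inordK; try lia.
move/(_ rely_cycL); rewrite Hind ?HLo; last lia.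
by rewrite eqxx.
Qed.

Lemma cyc_y0 : has_cycle y0.
Proof.
exists [seq inord i | i <- iota 1 L]; split.
- by rewrite size_map size_iota.
- rewrite map_inj_in_uniq ?iota_uniq // => a b; rewrite !mem_iota => Ha Hb E.
  by have := congr1 val E; rewrite /= !inordK //; lia.
- rewrite (cycle_path (inord 0)).
  apply/(pathP (inord 0)) => i; rewrite size_map size_iota => Hi.
  rewrite (nth_map 0) ?size_iota // nth_iota //.
  rewrite -nth_last size_map size_iota (nth_map 0) ?size_iota ?nth_iota; try lia.
  case: i Hi => [|i] Hi /=.
    rewrite adj_y0 !inordK; try lia.
    by have := rely_cycL; rewrite (_ : 1 + L.-1 = L) //; lia.
  rewrite (nth_map 0) ?size_iota ?nth_iota; try lia.
  rewrite adj_y0 !inordK; try lia.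
  by rewrite (_ : 1 + i.+1 = (1 + i).+1) // rely_cyc //; lia.
Qed.

Lemma seq_max (s : seq 'I_p) : s != [::] ->
  exists2 x, x \in s & forall y, y \in s -> y <= x.
Proof.
elim: s => [//|a s IH] _.
case: s IH => [|b s] IH.
  by exists a => [|y]; rewrite ?mem_seq1 ?eqxx // => /eqP ->.
case: IH => // x Hx Hm.
case: (leqP a x) => Hax.
  exists x; first by rewrite in_cons Hx orbT.
  by move=> y; rewrite in_cons => /orP [/eqP ->|/Hm].
exists a; first by rewrite in_cons eqxx.
move=> y; rewrite in_cons => /orP [/eqP -> //|/Hm H]; lia.
Qed.

Lemma ncyc_x0 : ~ has_cycle x0.
Proof.
case=> s [Hs Hu Hc].
have [x Hx Hm] : exists2 x, x \in s & forall y, y \in s -> y <= x.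
  by apply: seq_max; case: s Hs {Hu Hc}.
case: (rot_to Hx) => i s' Hrot.
have Hc' : path.cycle (adj x0) (x :: s') by rewrite -Hrot rot_cycle.
have Hu' : uniq (x :: s') by rewrite -Hrot rot_uniq.
have Hs' : 3 <= size (x :: s') by rewrite -Hrot size_rot.
have Hm' : forall y, y \in x :: s' -> y <= x by move=> y; rewrite -Hrot mem_rot; apply: Hm.
case: s' Hc' Hu' Hs' Hm' {Hrot} => [|a [|b r]] //= Hc' Hu' Hs' Hm'.
move: Hc' => /andP [Hxa /andP [_]]; rewrite rcons_path => /andP [_ Hzx].
set z := last b r in Hzx.
have Hz : z \in b :: r by exact: mem_last.
have Ha : a <= x by apply: Hm'; rewrite !inE eqxx orbT.
have Hzl : z <= x by apply: Hm'; rewrite in_cons in_cons Hz !orbT.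
move: Hxa Hzx; rewrite !adj_x0 => /(relx_step (ord_le x)) H1 /(relx_step (ord_le z)) H2.
have Eaz : a = z by apply: ord_inj; lia.
move: Hu'; rewrite /= !inE => /andP [_ /andP [/negP Hn' _]].
by apply: Hn'; rewrite Eaz -in_cons Hz.
Qed.

Definition tfo (k : nat) (v : 'I_p) : 'I_p := inord (tf k v).

Lemma tfoK (k : 'I_M) : involutive (tfo k.+1).
Proof.
have Hk : k.+1 <= M by exact: ltn_ord.
move=> v; apply: val_inj; rewrite /tfo /= !inordK ?ltnS ?tf_le ?ord_le //.
  by rewrite tfK //; lia.
Qed.

Definition tau (k : 'I_M) : {perm 'I_p} := perm (can_inj (tfoK k)).

Lemma tau_val k v : nat_of_ord (tau k v) = tf k.+1 v.
Proof. by rewrite permE /tfo /= inordK // ltnS tf_le ?ord_le //; exact: ltn_ord. Qed.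

Lemma tauV k v : ((tau k)^-1)%g v = tau k v.
Proof.
apply: (@perm_inj _ (tau k)); rewrite permKV; apply: val_inj.
rewrite /= !tau_val tfK //; have := ltn_ord k; lia.
Qed.

Definition xq (q : {perm 'I_p} * 'I_M) := relabel q.1 x0.
Definition yq (q : {perm 'I_p} * 'I_M) := relabel (tau q.2 * q.1)%g y0.
Definition Sq (q : {perm 'I_p} * 'I_M) : pred 'I_p := fun u => inV q.2.+1 ((q.1^-1)%g u).

Lemma deg_fam q : deg (xq q) = deg (yq q).
Proof.
apply: functional_extensionality => u /=.
rewrite invMg permM tauV tau_val degn_tf ?ord_le //; exact: ltn_ord.
Qed.

Lemma cover_fam q i (j : 'I_p) : j < deg (xq q) i -> nbr (xq q) i j != nbr (yq q) i j -> Sq q i.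
Proof.
case: q => pi k; rewrite /Sq /xq /yq /= => Hj.
apply: contraR => HnV; apply/eqP.
rewrite [in RHS]permM invMg permM tauV; congr (pi _).
have Hk : 1 <= k.+1 <= M by have := ltn_ord k; lia.
set w := (pi^-1)%g i.
have Hw := ord_le w.
have Hjd : j < degn w by [].
have Htw : nat_of_ord (tau k w) = tf k.+1 w := tau_val k w.
have Hy : yn (tau k w) j <= n'.
  by rewrite Htw yn_le ?tf_le ?degn_tf //; case/andP: Hk.
apply: val_inj => /=; rewrite tau_val /= !inordK ?ltnS ?xn_le //.
by rewrite Htw agree.
Qed.

Section Final.
Local Open Scope ring_scope.
Variables (T m : nat) (Q : qalg p T m).
Hypothesis wf : qalg_wf Q.

Lemma sum_norm A t : (t <= T)%N -> \sum_s `|run Q A t s| ^+ 2 = 1.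
Proof. by move=> Ht; rewrite -ip_self norm_run. Qed.

Lemma cnt (phi : qstate (qbasis p m)) (g : 'I_p -> nat) :
  \sum_(k < M) \sum_(s | inV k.+1 (g s.1.1.1)) `|phi s| ^+ 2 <= 4%:R * \sum_s `|phi s| ^+ 2.
Proof.
under eq_bigr do rewrite big_mkcond /=.
rewrite exchange_big /= mulr_sumr; apply: ler_sum => s _.
have -> : \sum_(k < M) (if inV k.+1 (g s.1.1.1) then `|phi s| ^+ 2 else 0)
   = (\sum_(k < M) inV k.+1 (g s.1.1.1))%:R * `|phi s| ^+ 2.
  rewrite natr_sum mulr_suml; apply: eq_bigr => k _.
  by case: (inV _ _); rewrite ?mul1r ?mul0r.
by apply: ler_wpM2r; [exact: exprn_ge0 | rewrite ler_nat inV_count].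
Qed.

Lemma fam_bound t : (t <= T)%N ->
  \sum_q Bnd Q (xq q) (yq q) (Sq q) t <= 8%:R * #|{perm 'I_p}|%:R.
Proof.
move=> Ht; rewrite /Bnd.
under eq_bigr do rewrite big_split /=.
rewrite big_split /= /Sq /xq /yq.
rewrite -(pair_bigA _ (fun (pi : {perm 'I_p}) (k : 'I_M) =>
  \sum_(s | inV k.+1 ((pi^-1)%g s.1.1.1)) `|run Q (relabel pi x0) t s| ^+ 2)).
rewrite -(pair_bigA _ (fun (pi : {perm 'I_p}) (k : 'I_M) =>
  \sum_(s | inV k.+1 ((pi^-1)%g s.1.1.1)) `|run Q (relabel (tau k * pi)%g y0) t s| ^+ 2)) /=.
have -> : 8%:R * #|{perm 'I_p}|%:R = \sum_(pi : {perm 'I_p}) 4%:R + \sum_(pi : {perm 'I_p}) (4%:R : C).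
  by rewrite !sumr_const -mulrnDl -natrD mulr_natr.
apply: lerD.
  apply: ler_sum => pi _.
  apply: le_trans (cnt (run Q (relabel pi x0) t) (fun u => nat_of_ord ((pi^-1)%g u))) _.
  by rewrite sum_norm // mulr1.
rewrite exchange_big /=.
have E : forall k : 'I_M, \sum_(pi : {perm 'I_p}) \sum_(s | inV k.+1 ((pi^-1)%g s.1.1.1))
        `|run Q (relabel (tau k * pi)%g y0) t s| ^+ 2
      = \sum_(pi : {perm 'I_p}) \sum_(s | inV k.+1 ((pi^-1)%g s.1.1.1))
        `|run Q (relabel pi y0) t s| ^+ 2.
  move=> k; rewrite (reindex_inj (mulgI ((tau k)^-1)%g)) /=.
  apply: eq_bigr => pi _; rewrite mulKVg; apply: eq_bigl => s.
  by rewrite invMg invgK permM tau_val inV_tf //; have := ltn_ord k; lia.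
under eq_bigr do rewrite E.
rewrite exchange_big /=; apply: ler_sum => pi _.
apply: le_trans (cnt (run Q (relabel pi y0) t) (fun u => nat_of_ord ((pi^-1)%g u))) _.
by rewrite sum_norm // mulr1.
Qed.

Lemma main_bound (P : adj_array p -> Prop) : decides Q P ->
  (forall q, (P (xq q) /\ ~ P (yq q)) \/ (~ P (xq q) /\ P (yq q))) ->
  (M <= 288 * T)%N.
Proof.
move=> Hdec HP.
have H := adversary wf Hdec deg_fam
   (fun q => conj (valid_relabel q.1 valid_x0) (valid_relabel _ valid_y0)) HP cover_fam.
have H2 : \sum_(t < T) \sum_q Bnd Q (xq q) (yq q) (Sq q) t
     <= \sum_(t < T) (8%:R * #|{perm 'I_p}|%:R : C).
  by apply: ler_sum => t _; apply: fam_bound; exact: ltnW.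
have H3 := le_trans H (ler_wpM2l (ler0n _ 36) H2).
move: H3; rewrite sumr_const card_ord card_prod card_ord -[_ *+ T]mulr_natr -!natrM ler_nat => H3.
have Hpos : (0 < #|{perm 'I_p}|)%N by apply/card_gt0P; exists 1%g.
rewrite -(leq_pmul2l Hpos); apply: leq_trans H3 _; lia.
Qed.

Lemma main_bip : decides Q (@bipartite p) -> (M <= 288 * T)%N.
Proof.
move=> Hdec; apply: (main_bound Hdec) => q; left; split.
- exact: bip_relabel bip_x0.
- by move/bip_relabel'; apply: nbip_y0.
Qed.

Lemma main_cyc : decides Q (@has_cycle p) -> (M <= 288 * T)%N.
Proof.
move=> Hdec; apply: (main_bound Hdec) => q; right; split.
- by move/cyc_relabel'; apply: ncyc_x0.
- exact: cyc_relabel cyc_y0.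
Qed.

End Final.

End Nat.

End MC.
Import MC.


Lemma setup n (Hn7 : 7 <= n) :
  exists n' L M (HL3 : 2 < L) (HLo : odd L) (HM1 : 0 < M) (HML : M < L) (Hn : M + L + 1 <= n'),
    n = n'.+1 /\ (forall T, M <= 288 * T -> n <= 582 * T).
Proof.
case: n Hn7 => [//|n'] Hn7.
set h := (n' - 2) %/ 4.
have HL3 : 2 < (2 * h).+1 by lia.
have HLo : odd (2 * h).+1 by rewrite /= mul2n odd_double.
have HM1 : 0 < 2 * h by lia.
have HML : 2 * h < (2 * h).+1 by lia.
have Hn : 2 * h + (2 * h).+1 + 1 <= n' by lia.
exists n', (2 * h).+1, (2 * h), HL3, HLo, HM1, HML, Hn; split => // T; lia.
Qed.

Theorem lemma3 :
  omega_n_lower_bound (@bipartite) /\ omega_n_lower_bound (@has_cycle).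
Proof.
split; exists 582, 7 => n Hn7 T m Q wf Hdec;
  case: (@setup n Hn7) => n' [L [M [HL3 [HLo [HM1 [HML [Hn [En Hf]]]]]]]];
  subst n; apply: Hf.
- exact: (main_bip HL3 HLo HM1 HML Hn wf Hdec).
- exact: (main_cyc HL3 HLo HM1 HML Hn wf Hdec).
Qed.
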